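(* Let $\beta\in(0,1)$, $z>0$, $c>0$, and let $N$ be a positive integer. Let $F$ be a continuous cumulative distribution function with support $[\underline{w},\overline{w}]$, $\underline{w}<\overline{w}$, and mean $\mu_w$. Assume $\underline{w}<(1-\beta)z+\beta\mu_w$ and $z+c<\overline{w}$. For $x\in[\underline{w},\overline{w}]$ put $$\Upsilon(x)=\int_{\underline{w}}^{x}x\,dF(w)+\int_{x}^{\overline{w}}w\,dF(w).$$ Then the equation $x=z(1-\beta)+\beta\,\Upsilon(x)$ has exactly one solution $x\in[\underline{w},\overline{w}]$; call it $w_R(0)$. Defining recursively $w_R(n)=(z+c)(1-\beta)+\beta\,\Upsilon(w_R(n-1))$ for $n=1,\dots,N$, we have $$\overline{w}>w_R(N)>\cdots>w_R(n+1)>w_R(n)>\cdots>w_R(0)>\underline{w}.$$ Moreover, the same conclusions hold when the support of $F$ is $[\underline{w},\infty)$ (with $F$ continuous with finite mean $\mu_w$, $\underline{w}<(1-\beta)z+\beta\mu_w$, $\Upsilon(x)=\int_{\underline{w}}^{x}x\,dF(w)+\int_x^\infty w\,dF(w)$): the equation $x=z(1-\beta)+\beta\Upsilon(x)$ has a unique solution $w_R(0)\in[\underline{w},\infty)$ and $\underline{w}<w_R(0)<w_R(1)<\cdots<w_R(N)<\infty$.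
   Context: Interpretation (the paper's model): a risk-neutral, infinitely lived worker maximizes $\mathrm{E}_0\sum_{t\ge0}\beta^t x_t$, where $x_t$ is income. While unemployed, the worker draws one i.i.d. wage offer per period from $F$; an accepted job paying $w$ is kept forever (value $W(w)=w/(1-\beta)$). While unemployed with $n\ge1$ remaining periods of unemployment-insurance benefits, flow income is $z+c$ ($z$ = value of nonwork, $c$ = benefit) and the state moves to $n-1$ after a rejection; with $n=0$ remaining periods flow income is $z$ and the state stays at $0$. The value of unemployment satisfies $U(n)=z+c+\beta\mathrm{E}[\max\{U(n-1),W(w)\}]$ for $n\ge1$ and $U(0)=z+\beta\mathrm{E}[\max\{U(0),W(w)\}]$. The reservation wage $w_R(n)$ is defined by $W(w_R(n))=U(n)$, and it satisfies exactly the equations given in the claim; the optimal policy in state $n$ is to accept any offer $w\ge w_R(n)$. No possibility of extension of benefits is considered here. *)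

(* Defs.v *)
From HB Require Import structures.
From mathcomp Require Import all_boot all_order all_algebra.
From mathcomp Require Import all_classical all_reals all_analysis.
Set Implicit Arguments. Unset Strict Implicit. Unset Printing Implicit Defensive.
Import Order.TTheory GRing.Theory Num.Theory.
Import numFieldNormedType.Exports.
Local Open Scope classical_set_scope.
Local Open Scope ring_scope.

Definition cdfP (R : realType) (P : probability R R) (x : R) : R :=
  fine (P [set` `]-oo, x]]).

(* support of P: points all of whose neighbourhoods have positive probability
   (the smallest closed set of full measure) *)
Definition dist_support (R : realType) (P : probability R R) : set R :=
  [set x | forall e : R, 0 < e -> (0 < P (ball x e))%E].

Definition meanP (R : realType) (P : probability R R) : R :=
  fine (\int[P]_w (w%:E)).

Definition UpsilonB (R : realType) (P : probability R R) (a b x : R) : R :=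
  fine (\int[P]_(w in [set` `[a, x]]) (x%:E)) + fine (\int[P]_(w in [set` `]x, b]]) (w%:E)).

Definition UpsilonU (R : realType) (P : probability R R) (a x : R) : R :=
  fine (\int[P]_(w in [set` `[a, x]]) (x%:E)) + fine (\int[P]_(w in [set` `]x, +oo[]) (w%:E)).

Definition wR (R : realType) (Ups : R -> R) (beta z c w0 : R) (n : nat) : R :=
  iter n (fun y => (z + c) * (1 - beta) + beta * Ups y) w0.

(* Main.v *)
Require Import Defs.
From HB Require Import structures.
From mathcomp Require Import all_boot all_order all_algebra.
From mathcomp Require Import all_classical all_reals all_analysis.
From mathcomp Require Import ring lra measurable_realfun.
Import Order.TTheory GRing.Theory Num.Theory.
Import numFieldNormedType.Exports.
Local Open Scope classical_set_scope.
Local Open Scope ring_scope.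
Section A.
Variable R : realType.
Lemma lip_cont (f : R -> R) : (forall x y, x <= y -> 0 <= f y - f x <= y - x) -> continuous f.
Proof.
move=> H x; apply/cvgrPdist_lt => e e0.
apply/nbhs_ballP; exists e => // y; rewrite /ball /= => Hy.
apply: le_lt_trans Hy.
case: (leP x y) => h.
  have /andP[h1 h2] := H x y h.
  by rewrite distrC (distrC x) !ger0_norm //; lra.
have /andP[h1 h2] := H y x (ltW h).
by rewrite !ger0_norm //; lra.
Qed.
Definition clamp (a b x : R) := Num.min (Num.max x a) b.
Lemma clamp_mono a b x y : a <= b -> x <= y -> clamp a b x <= clamp a b y /\ clamp a b y - clamp a b x <= y - x.
Proof.
move=> ab xy; rewrite /clamp /Num.max /Num.min.
repeat case: ifP => /=; move=> *; lra.
Qed.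
Lemma clamp_in a b x : a <= b -> a <= clamp a b x <= b.
Proof.
move=> ab; rewrite /clamp /Num.max /Num.min.
repeat case: ifP => /=; move=> *; apply/andP; split; lra.
Qed.
Lemma clamp_id a b x : a <= x <= b -> clamp a b x = x.
Proof.
move=> /andP[h1 h2]; rewrite /clamp /Num.max /Num.min.
repeat case: ifP => /=; move=> *; lra.
Qed.

Lemma root_exists (U : R -> R) a B beta z :
  0 < beta < 1 -> a <= B ->
  (forall x y, a <= x -> x <= y -> y <= B -> U x <= U y /\ U y - U x <= y - x) ->
  a - z * (1 - beta) - beta * U a < 0 ->
  0 < B - z * (1 - beta) - beta * U B ->
  exists x, a <= x <= B /\ x = z * (1 - beta) + beta * U x.
Proof.
move=> /andP[b0 b1] aB hU ga gB.
pose g x := x - z * (1 - beta) - beta * U (clamp a B x).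
have gc : continuous g.
  apply: lip_cont => x y xy.
  have [c1 c2] := @clamp_mono a B x y aB xy.
  have /andP[i1 i2] := @clamp_in a B x aB.
  have /andP[j1 j2] := @clamp_in a B y aB.
  have [u1 u2] := hU _ _ i1 c1 j2.
  set p := U (clamp a B x) in u1 u2 *; set q := U (clamp a B y) in u1 u2 *.
  rewrite /g -/p -/q.
  have h1 : beta * (q - p) <= q - p by nra.
  have h2 : 0 <= beta * (q - p) by nra.
  apply/andP; split; nra.
have ga' : g a = a - z * (1 - beta) - beta * U a.
  by rewrite /g clamp_id // lexx aB.
have gB' : g B = B - z * (1 - beta) - beta * U B.
  by rewrite /g clamp_id // lexx aB.
have := @IVT R g a B 0 aB (continuous_subspaceT gc).
case.
  have lt : a - z * (1 - beta) - beta * U a < B - z * (1 - beta) - beta * U B by lra.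
  rewrite ga' gB' /Num.min /Num.max lt; apply/andP; split; lra.
move=> x; rewrite in_itv /= => /andP[x1 x2] gx.
exists x; split; first by rewrite x1 x2.
move: gx; rewrite /g clamp_id ?x1 ?x2 //; lra.
Qed.

Lemma uniq_fix (U : R -> R) beta z x y :
  0 < beta < 1 -> x <= y -> U y - U x <= y - x ->
  x = z * (1 - beta) + beta * U x -> y = z * (1 - beta) + beta * U y -> x = y.
Proof.
move=> /andP[b0 b1] xy h ex ey.
have : beta * (U y - U x) <= beta * (y - x) by rewrite ler_pM2l.
move=> hh; apply/eqP; rewrite eq_le xy /=.
nra.
Qed.

Lemma iter_prop (U : R -> R) (Ok : R -> Prop) a beta z c w0 :
  0 < beta < 1 -> 0 < c ->
  (forall x y, a < x -> x < y -> Ok y -> U x < U y) ->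
  (forall x, a < x -> Ok x -> Ok ((z + c) * (1 - beta) + beta * U x)) ->
  a < w0 -> Ok w0 -> w0 = z * (1 - beta) + beta * U w0 ->
  forall n, a < wR U beta z c w0 n /\ Ok (wR U beta z c w0 n) /\
            wR U beta z c w0 n < wR U beta z c w0 n.+1 /\ Ok (wR U beta z c w0 n.+1).
Proof.
move=> /andP[b0 b1] c0 hS hO aw0 Ow0 ew0.
elim=> [|n [h1 [h2 [h3 h4]]]].
  rewrite /wR /=; split => //; split => //; split; last exact: hO.
  rewrite [X in X < _]ew0; nra.
have e2 : wR U beta z c w0 n.+2 = (z + c) * (1 - beta) + beta * U (wR U beta z c w0 n.+1) by [].
have e1 : wR U beta z c w0 n.+1 = (z + c) * (1 - beta) + beta * U (wR U beta z c w0 n) by [].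
have a1 : a < wR U beta z c w0 n.+1 by lra.
split => //; split => //; split; last by rewrite e2; exact: hO.
have hh := hS _ _ h1 h3 h4.
rewrite e2 [X in X < _]e1.
have : beta * U (wR U beta z c w0 n) < beta * U (wR U beta z c w0 n.+1) by rewrite ltr_pM2l.
lra.
Qed.
End A.
Section M.
Variable R : realType.
Variable P : probability R R.
Local Notation F := (cdfP P).

Lemma finP (A : set R) : measurable A -> P A = (fine (P A))%:E.
Proof. by move=> mA; rewrite fineK // fin_num_measure. Qed.

Lemma F_ge0 x : 0 <= F x.
Proof. by rewrite /cdfP fine_ge0. Qed.

Lemma F_le1 x : F x <= 1.
Proof.
rewrite /cdfP -lee_fin -finP //; exact: probability_le1.
Qed.

Lemma Foc u v : u <= v -> fine (P [set` `]u, v]]) = F v - F u.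
Proof.
move=> uv.
have e : [set` `]-oo, v]] = [set` `]-oo, u]] `|` [set` `]u, v]] :> set R.
  by apply: itv_bndbnd_setU; rewrite bnd_simp.
have : P [set` `]-oo, v]] = P [set` `]-oo, u]] + P [set` `]u, v]] :> \bar R.
  rewrite e measureU //; apply/seteqP; split => x //=.
  by rewrite !in_itv /= => -[] h1 /andP[h2 h3]; lra.
rewrite /cdfP => ->; rewrite fineD ?fin_num_measure //; lra.
Qed.

Lemma F_mono u v : u <= v -> F u <= F v.
Proof.
move=> uv; have := @Foc u v uv.
have : 0 <= fine (P [set` `]u, v]]) by rewrite fine_ge0.
lra.
Qed.

Arguments F_mono [u v].
Let idTR : R -> R := idfun.
#[local] HB.instance Definition _ :=
  @isMeasurableFun.Build _ _ _ _ idTR (@measurable_id _ _ setT).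

Lemma cdfE r : cdf (idTR : {RV P >-> R}) r = P [set` `]-oo, r]].
Proof. by []. Qed.

Lemma F_low y : 0 < y -> exists t, F t < y.
Proof.
move=> y0.
have h : F t @[t --> -oo] --> 0.
  apply: (@cvg_trans _ (fine \o cdf (idTR : {RV P >-> R}) @ -oo)).
    by apply: near_eq_cvg; near=> t; rewrite /= cdfE.
  exact/fine_cvg/cvg_cdfNy0.
have := cvgr_dist_lt _ _ h _ y0.
move=> [M [_ HM]]; exists (M - 1).
have := HM (M - 1); rewrite ltrBlDr ltrDl ltr01 => /(_ isT).
rewrite sub0r normrN ger0_norm //; exact: F_ge0.
Unshelve. all: by end_near.
Qed.

Lemma F_high y : y < 1 -> exists t, y < F t.
Proof.
move=> y1.
have h : F t @[t --> +oo] --> (1:R).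
  apply: (@cvg_trans _ (fine \o cdf (idTR : {RV P >-> R}) @ +oo)).
    by apply: near_eq_cvg; near=> t; rewrite /= cdfE.
  exact/fine_cvg/cvg_cdfy1.
have y0 : 0 < 1 - y by lra.
have := cvgr_dist_lt _ _ h _ y0.
move=> [M [_ HM]]; exists (M + 1).
have := HM (M + 1); rewrite ltrDl ltr01 => /(_ isT).
rewrite ger0_norm; first lra.
by rewrite subr_ge0 F_le1.
Unshelve. all: by end_near.
Qed.

Lemma supp_of_incr x : (forall d, 0 < d -> F (x - d) < F (x + d)) -> dist_support P x.
Proof.
move=> H e e0.
have e2 : 0 < e / 2 by rewrite divr_gt0.
have h := H _ e2.
have le : (P [set` `](x - e / 2)%R, (x + e / 2)%R]] <= P (ball x e))%E.
  apply: le_measure; rewrite ?inE //; first by rewrite ball_itv; exact: measurable_itv.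
  move=> y /=; rewrite in_itv /= => /andP[h1 h2].
  rewrite /ball /= ltr_distlC; apply/andP; split; lra.
apply: lt_le_trans le.
rewrite finP // Foc; last lra.
rewrite lte_fin; lra.
Qed.

Lemma sup_incr y : (exists t, F t < y) -> (exists M, forall t, F t < y -> t <= M) ->
  forall d, 0 < d -> F (sup [set t | F t < y] - d) < F (sup [set t | F t < y] + d).
Proof.
move=> [t1 ht1] [M HM] d d0.
have hs : has_sup [set t | F t < y].
  split; first by exists t1.
  by exists M => t /= /HM.
have h1 : y <= F (sup [set t | F t < y] + d).
  rewrite leNgt; apply/negP => h.
  have := sup_upper_bound hs h; lra.
have [e /= he1 he2] := sup_adherent d0 hs.
have := F_mono (ltW he2); lra.
Qed.

Lemma F_below a : (forall x, x < a -> ~ dist_support P x) -> continuous F ->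
  forall t, t <= a -> F t = 0.
Proof.
move=> Hs Fc.
have lt : forall t, t < a -> F t = 0.
  move=> t0 t0a; apply/eqP; rewrite eq_le F_ge0 andbT leNgt; apply/negP => Ft0.
  have y0 : 0 < F t0 / 2 by rewrite divr_gt0.
  have ex := F_low _ y0.
  have ub : exists M, forall t, F t < F t0 / 2 -> t <= M.
    exists t0 => t ht; rewrite leNgt; apply/negP => h.
    have := F_mono (ltW h); lra.
  apply: (Hs (sup [set t | F t < F t0 / 2])).
    have [M HM] := ub.
    apply: (@le_lt_trans _ _ t0) => //.
    apply: sup_le_ub; first by case: ex => t ht; exists t.
    move=> t /= ht; rewrite leNgt; apply/negP => h.
    have := F_mono (ltW h); lra.
  apply: supp_of_incr; exact: sup_incr.
move=> t; rewrite le_eqVlt => /orP[/eqP->|]; last exact: lt.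
apply/eqP; rewrite eq_le F_ge0 andbT leNgt; apply/negP => Fa.
have hc := Fc a.
have [e e0 He] := proj1 (nbhs_ballP _ _) (cvgr_dist_lt _ _ hc _ Fa).
have e2 : 0 < e / 2 by rewrite divr_gt0.
have := He (a - e / 2).
rewrite /ball /= ltr_distlC.
have -> : a - e < a - e / 2 < a + e by apply/andP; split; lra.
move=> /(_ isT); rewrite (lt (a - e / 2)); last lra.
rewrite subr0 ltr_norml; lra.
Qed.

Lemma F_above b : (forall x, b < x -> ~ dist_support P x) -> continuous F ->
  forall t, b <= t -> F t = 1.
Proof.
move=> Hs Fc.
have lt : forall t, b < t -> F t = 1.
  move=> t0 t0b; apply/eqP; rewrite eq_le F_le1 /= leNgt; apply/negP => Ft0.
  have y1 : (F t0 + 1) / 2 < 1 by lra.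
  have [t1 ht1] := F_high _ y1.
  have ex : exists t, F t < (F t0 + 1) / 2 by exists t0; lra.
  have ub : exists M, forall t, F t < (F t0 + 1) / 2 -> t <= M.
    exists t1 => t ht; rewrite leNgt; apply/negP => h.
    have := F_mono (ltW h); lra.
  apply: (Hs (sup [set t | F t < (F t0 + 1) / 2])).
    apply: (@lt_le_trans _ _ t0) => //.
    have [M HM] := ub.
    apply: sup_upper_bound => /=; last lra.
    split; first by exists t0 => /=; lra.
    by exists M => t /= /HM.
  apply: supp_of_incr; exact: sup_incr.
move=> t; rewrite le_eqVlt => /orP[/eqP<-|]; last exact: lt.
apply/eqP; rewrite eq_le F_le1 /= leNgt; apply/negP => Fb.
have Fb' : 0 < 1 - F b by lra.
have hc := Fc b.
have [e e0 He] := proj1 (nbhs_ballP _ _) (cvgr_dist_lt _ _ hc _ Fb').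
have := He (b + e / 2).
rewrite /ball /= ltr_distlC.
move: e0 => /= e0.
have -> : b - e < b + e / 2 < b + e by apply/andP; split; lra.
move=> /(_ isT); rewrite (lt (b + e / 2)); last lra.
rewrite ltr_norml; lra.
Qed.
Definition Ug (a : R) (t : itv_bound R) (x : R) : R :=
  fine (\int[P]_(w in [set` `[a, x]]) (x%:E)) +
  fine (\int[P]_(w in [set` Interval (BRight x) t]) (w%:E)).

Lemma UgB a b x : UpsilonB P a b x = Ug a (BRight b) x.
Proof. by []. Qed.
Lemma UgU a x : UpsilonU P a x = Ug a +oo%O x.
Proof. by []. Qed.

Lemma pA a x : F a = 0 -> a <= x -> fine (P [set` `[a, x]]) = F x.
Proof.
move=> Fa ax; apply/eqP; rewrite eq_le; apply/andP; split.
  rewrite /cdfP fine_le ?fin_num_measure //; apply: le_measure; rewrite ?inE //.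
  by move=> w /=; rewrite !in_itv /= => /andP[].
have := @Foc a x ax; rewrite Fa subr0 => <-.
rewrite fine_le ?fin_num_measure //; apply: le_measure; rewrite ?inE //.
by move=> w /=; rewrite !in_itv /= => /andP[h1 h2]; rewrite h2 ltW.
Qed.

Lemma cstI (D : set R) (k : R) : measurable D ->
  fine (\int[P]_(w in D) (k%:E)) = k * fine (P D).
Proof.
move=> mD; have := @integral_cst _ _ _ P D mD (k%:E); rewrite /cst => ->.
by rewrite fineM // fin_num_measure.
Qed.

Lemma mEFin (D : set R) : measurable_fun D (fun w : R => w%:E).
Proof. by apply/measurable_EFinP; exact: measurable_id. Qed.

Lemma boundsI x y : x <= y ->
  P.-integrable [set` `]x, y]] (fun w => w%:E) ->
  x * (F y - F x) <= fine (\int[P]_(w in [set` `]x, y]]) (w%:E)) <= y * (F y - F x).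
Proof.
move=> xy hi.
have mD : measurable [set` `]x, y]] by exact: measurable_itv.
have fi := integrable_fin_num mD hi.
rewrite -!(@Foc x y xy) -!cstI //.
apply/andP; split; rewrite fine_le ?(integrable_fin_num mD) //.
- exact: (finite_measure_integrable_cst P x mD).
- apply: (le_integral mD) => //; first exact: (finite_measure_integrable_cst P x mD).
  by move=> w; rewrite inE /= in_itv /= => /andP[h1 h2]; rewrite lee_fin ltW.
- exact: (finite_measure_integrable_cst P y mD).
- apply: (le_integral mD) => //; first exact: (finite_measure_integrable_cst P y mD).
  by move=> w; rewrite inE /= in_itv /= => /andP[h1 h2]; rewrite lee_fin.
Qed.
Lemma splitI a t x y : a <= x -> x <= y -> (BRight y <= t)%O ->
  P.-integrable [set` Interval (BRight a) t] (fun w => w%:E) ->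
  fine (\int[P]_(w in [set` Interval (BRight x) t]) (w%:E)) =
  fine (\int[P]_(w in [set` `]x, y]]) (w%:E)) +
  fine (\int[P]_(w in [set` Interval (BRight y) t]) (w%:E)).
Proof.
move=> ax xy yt hi.
have sub : forall u, a <= u -> [set` Interval (BRight u) t] `<=` [set` Interval (BRight a) t].
  move=> u au; apply: subset_itvr; rewrite bnd_simp //.
have hx := integrableS (measurable_itv _) (measurable_itv _) (sub x ax) hi.
have hy := integrableS (measurable_itv _) (measurable_itv _) (sub y (le_trans ax xy)) hi.
have hxy : P.-integrable [set` `]x, y]] (fun w => w%:E).
  apply: integrableS hx => //; try exact: measurable_itv.
  by apply: subset_itvl.
rewrite (@itv_bndbnd_setU _ _ (BRight x) (BRight y) t) ?bnd_simp //.
rewrite integral_setU //. 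
all: try exact: mEFin.
all: try exact: measurable_itv.
  by rewrite fineD // (integrable_fin_num (measurable_itv _)).
apply/disj_setPS => w [] /=; rewrite in_itv /= => /andP[_ h2].
by rewrite itv_boundlr => /andP[h3 _]; move: h3; rewrite bnd_simp; lra.
Qed.

Lemma Udiff a t x y : F a = 0 -> a <= x -> x <= y -> (BRight y <= t)%O ->
  P.-integrable [set` Interval (BRight a) t] (fun w => w%:E) ->
  (y - x) * F x <= Ug a t y - Ug a t x <= (y - x) * F y.
Proof.
move=> Fa ax xy yt hi.
have hxy : P.-integrable [set` `]x, y]] (fun w => w%:E).
  apply: integrableS hi => //; try exact: measurable_itv.
  by apply: subset_itv => //; rewrite bnd_simp.
have := @boundsI x y xy hxy.
rewrite /Ug (@splitI a t x y ax xy yt hi) !cstI; try exact: measurable_itv.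
rewrite (@pA a x Fa ax) (@pA a y Fa (le_trans ax xy)).
move=> /andP[h1 h2]; apply/andP; split; nra.
Qed.
Lemma intT (D : set R) : measurable D -> P (~` D) = 0%E ->
  (\int[P]_w (w%:E))%E = (\int[P]_(w in D) (w%:E))%E.
Proof.
move=> mD PD.
rewrite -(setUv D) integral_setU //.
all: try exact: mEFin.
all: try exact: measurableC.
rewrite (@null_set_integral _ _ _ P (~` D)) ?adde0 //; first exact: measurableC.
by apply/disj_setPS => w [] /= h1 h2.
Qed.

Lemma P_left a : F a = 0 -> P [set` `]-oo, a]] = 0%E.
Proof.
move=> Fa; rewrite (finP _ (measurable_itv _)).
by move: Fa; rewrite /cdfP => ->.
Qed.

Lemma P_right b : F b = 1 -> P [set` `]b, +oo[] = 0%E.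
Proof.
move=> Fb.
have h1 : P [set` `]-oo, b]] = 1%E.
  rewrite finP; last exact: measurable_itv.
  by move: Fb; rewrite /cdfP => ->.
have hf : P [set` `]b, +oo[] \is a fin_num by apply: fin_num_measure; exact: measurable_itv.
have : P [set: R] = (P [set` `]-oo, b]] + P [set` `]b, +oo[])%E.
  rewrite -(itv_setU_setT false b) measureU //; try exact: measurable_itv.
  apply/seteqP; split => w //=.
  by rewrite !in_itv /= => -[] h2 h3; lra.
rewrite probability_setT h1.
move: hf; case: (P [set` `]b, +oo[]) => //= r _ /eqP; rewrite -EFinD eqe => /eqP h.
congr (_%:E); lra.
Qed.

Lemma bnd_int a b : P.-integrable [set` `]a, b]] (fun w => w%:E).
Proof.
apply: (@measurable_bounded_integrable _ _ _ P idfun).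
- exact: measurable_itv.
- by apply: (le_lt_trans (probability_le1 P (measurable_itv _))); rewrite ltry.
- exact: measurable_id.
exists (`|a| + `|b|); split; first by rewrite realE; apply/orP; left; rewrite addr_ge0.
move=> M HM x /=; rewrite in_itv /= => /andP[h1 h2].
have := ler_norm a; have := ler_norm (- a); rewrite normrN.
have := ler_norm b; have := ler_norm (- b); rewrite normrN.
move=> *; rewrite ler_norml; apply/andP; split; lra.
Qed.

Lemma UaB a b : a <= b -> F a = 0 -> F b = 1 -> Ug a (BRight b) a = meanP P.
Proof.
move=> ab Fa Fb.
rewrite /Ug cstI ?(@pA a a Fa (lexx a)) ?Fa ?mulr0 ?add0r; last exact: measurable_itv.
rewrite /meanP (@intT [set` `]a, b]]) //; try exact: measurable_itv.
rewrite setCitv /=.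
rewrite measureU //; try exact: measurable_itv.
  by transitivity (0 + 0 : \bar R)%E; [congr (_ + _)%E; [exact: P_left | exact: P_right] | exact: adde0].
apply/seteqP; split => w //=.
by rewrite !in_itv /= => -[] h1 h2; lra.
Qed.

Lemma UaU a : F a = 0 -> Ug a +oo%O a = meanP P.
Proof.
move=> Fa.
rewrite /Ug cstI ?(@pA a a Fa (lexx a)) ?Fa ?mulr0 ?add0r; last exact: measurable_itv.
rewrite /meanP (@intT [set` `]a, +oo[]) //; try exact: measurable_itv.
by rewrite setCitvr P_left.
Qed.

Lemma UbB a b : a <= b -> F a = 0 -> F b = 1 -> Ug a (BRight b) b = b.
Proof.
move=> ab Fa Fb.
rewrite /Ug cstI ?(@pA a b Fa ab) ?Fb ?mulr1; last exact: measurable_itv.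
by rewrite set_itvxx integral_set0 addr0.
Qed.

Lemma Fpos m e x : dist_support P m -> 0 < e -> m + e <= x -> 0 < F x.
Proof.
move=> hm e0 mex.
have := hm e e0.
have le : (P (ball m e) <= P [set` `]-oo, x]])%E.
  apply: le_measure; rewrite ?inE //; first by rewrite ball_itv; exact: measurable_itv.
  move=> y; rewrite /ball /= ltr_distlC in_itv /= => /andP[h1 h2]; lra.
move=> h; have := lt_le_trans h le.
by rewrite (finP _ (measurable_itv _)) lte_fin.
Qed.
End M.

Theorem proposition1 :
  (forall (R : realType) (beta z c : R) (N : nat) (P : probability R R)
          (wlo whi : R),
    0 < beta < 1 -> 0 < z -> 0 < c -> (0 < N)%N ->
    wlo < whi ->
    continuous (cdfP P) ->
    dist_support P = [set` `[wlo, whi]] ->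
    wlo < (1 - beta) * z + beta * meanP P ->
    z + c < whi ->
    (exists! x : R, wlo <= x <= whi /\
                    x = z * (1 - beta) + beta * UpsilonB P wlo whi x) /\
    (forall w0 : R, wlo <= w0 <= whi ->
       w0 = z * (1 - beta) + beta * UpsilonB P wlo whi w0 ->
       wlo < wR (UpsilonB P wlo whi) beta z c w0 0 /\
       (forall n : nat, (n < N)%N ->
          wR (UpsilonB P wlo whi) beta z c w0 n <
          wR (UpsilonB P wlo whi) beta z c w0 n.+1) /\
       wR (UpsilonB P wlo whi) beta z c w0 N < whi)) /\
  (forall (R : realType) (beta z c : R) (N : nat) (P : probability R R)
          (wlo : R),
    0 < beta < 1 -> 0 < z -> 0 < c -> (0 < N)%N ->
    continuous (cdfP P) ->
    dist_support P = [set` `[wlo, +oo[] ->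
    P.-integrable setT (fun w : R => w%:E) ->
    wlo < (1 - beta) * z + beta * meanP P ->
    (exists! x : R, wlo <= x /\
                    x = z * (1 - beta) + beta * UpsilonU P wlo x) /\
    (forall w0 : R, wlo <= w0 ->
       w0 = z * (1 - beta) + beta * UpsilonU P wlo w0 ->
       wlo < wR (UpsilonU P wlo) beta z c w0 0 /\
       (forall n : nat, (n < N)%N ->
          wR (UpsilonU P wlo) beta z c w0 n <
          wR (UpsilonU P wlo) beta z c w0 n.+1))).
Proof.
split.
- move=> R beta z c N P a b hb z0 c0 N0 ab Fc HS hmu hzc.
  have b0 : 0 < beta by case/andP: hb.
  have b1 : beta < 1 by case/andP: hb.
  have HSl : forall x, x < a -> ~ dist_support P x.
    by move=> x xa; rewrite HS /= in_itv /= => /andP[h1 h2]; lra.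
  have HSr : forall x, b < x -> ~ dist_support P x.
    by move=> x xb; rewrite HS /= in_itv /= => /andP[h1 h2]; lra.
  have Fa := @F_below R P a HSl Fc a (lexx a).
  have Fb := @F_above R P b HSr Fc b (lexx b).
  have hi := @bnd_int R P a b.
  have E : UpsilonB P a b = Ug R P a (BRight b) by [].
  rewrite E; set U := Ug R P a (BRight b).
  have hU1 : forall x y, a <= x -> x <= y -> y <= b -> U x <= U y /\ U y - U x <= y - x.
    move=> x y ax xy yb.
    have := @Udiff R P a (BRight b) x y Fa ax xy _ hi; rewrite bnd_simp => /(_ yb) /andP[h1 h2].
    have := @F_ge0 R P x; have := @F_le1 R P y; have := @F_ge0 R P y.
    rewrite /U; move=> *; split; nra.
  have hU2 : forall x y, a < x -> x < y -> y <= b -> U x < U y.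
    move=> x y ax xy yb.
    have := @Udiff R P a (BRight b) x y Fa (ltW ax) (ltW xy) _ hi; rewrite bnd_simp => /(_ yb) /andP[h1 h2].
    have hm : dist_support P ((a + x) / 2) by rewrite HS /= in_itv /=; apply/andP; split; lra.
    have := @Fpos R P ((a + x) / 2) ((x - a) / 2) x hm; rewrite !divr_gt0 //; last lra.
    move=> /(_ isT); have -> : (a + x) / 2 + (x - a) / 2 = x by field.
    move=> /(_ (lexx x)) Fx; rewrite /U; nra.
  have Ua : U a = meanP P := @UaB R P a b (ltW ab) Fa Fb.
  have Ub : U b = b := @UbB R P a b (ltW ab) Fa Fb.
  have [x0 [hx0 ex0]] := @root_exists R U a b beta z hb (ltW ab) hU1 ltac:(rewrite Ua; lra) ltac:(rewrite Ub; nra).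
  split.
    exists x0; split => // y [hy ey].
    case/andP: hx0 => x1 x2; case/andP: hy => y1 y2.
    case: (leP x0 y) => h.
      by apply: (@uniq_fix R U beta z _ _ hb h) => //; have [] := hU1 x0 y x1 h y2.
    by apply/esym; apply: (@uniq_fix R U beta z _ _ hb (ltW h)) => //; have [] := hU1 y x0 y1 (ltW h) x2.
  move=> w0 /andP[w1 w2] ew0.
  have aw0 : a < w0.
    rewrite lt_neqAle w1 andbT; apply/eqP => e; move: ew0; rewrite -e Ua; lra.
  have w0b : w0 < b.
    rewrite lt_neqAle w2 andbT; apply/eqP => e; move: ew0; rewrite e Ub; nra.
  have hS : forall x y, a < x -> x < y -> y < b -> U x < U y.
    by move=> x y ax xy yb; apply: hU2 => //; exact: ltW.
  have hO : forall x, a < x -> x < b -> (z + c) * (1 - beta) + beta * U x < b.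
    move=> x ax xb; have [h1 _] := hU1 x b (ltW ax) (ltW xb) (lexx b).
    rewrite Ub in h1; nra.
  have IT := @iter_prop R U (fun x => x < b) a beta z c w0 hb c0 hS hO aw0 w0b ew0.
  split; first by have [] := IT 0%N.
  split; first by move=> n _; have [_ [_ []]] := IT n.
  by have [_ []] := IT N.
- move=> R beta z c N P a hb z0 c0 N0 Fc HS hint hmu.
  have b0 : 0 < beta by case/andP: hb.
  have b1 : beta < 1 by case/andP: hb.
  have HSl : forall x, x < a -> ~ dist_support P x.
    by move=> x xa; rewrite HS /= in_itv /= andbT; lra.
  have Fa := @F_below R P a HSl Fc a (lexx a).
  have hi : P.-integrable [set` Interval (BRight a) +oo%O] (fun w => w%:E).
    by apply: integrableS hint => //; exact: measurable_itv.
  have E : UpsilonU P a = Ug R P a +oo%O by [].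
  rewrite E; set U := Ug R P a +oo%O.
  have hU1 : forall x y, a <= x -> x <= y -> U x <= U y /\ U y - U x <= y - x.
    move=> x y ax xy.
    have := @Udiff R P a +oo%O x y Fa ax xy _ hi => /(_ isT) /andP[h1 h2].
    have := @F_ge0 R P x; have := @F_le1 R P y; have := @F_ge0 R P y.
    rewrite /U; move=> *; split; nra.
  have hU2 : forall x y, a < x -> x < y -> U x < U y.
    move=> x y ax xy.
    have := @Udiff R P a +oo%O x y Fa (ltW ax) (ltW xy) isT hi => /andP[h1 h2].
    have hm : dist_support P ((a + x) / 2) by rewrite HS /= in_itv /= andbT; lra.
    have := @Fpos R P ((a + x) / 2) ((x - a) / 2) x hm; rewrite !divr_gt0 //; last lra.
    move=> /(_ isT); have -> : (a + x) / 2 + (x - a) / 2 = x by field.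
    move=> /(_ (lexx x)) Fx; rewrite /U; nra.
  have Ua : U a = meanP P := @UaU R P a Fa.
  set mu := meanP P in Ua hmu *.
  pose B := `|a| + 1 + `|z| + `|mu - a| / (1 - beta).
  have aB : a <= B.
    have := ler_norm a; have : 0 <= `|mu - a| / (1 - beta) by rewrite divr_ge0 // subr_ge0 ltW.
    rewrite /B; move=> *; have := normr_ge0 z; lra.
  have gB : 0 < B - z * (1 - beta) - beta * U B.
    have [_ h] := hU1 a B (lexx a) aB; rewrite Ua in h.
    have hB : (1 - beta) * B = (1 - beta) * (`|a| + 1 + `|z|) + `|mu - a|.
      rewrite /B; field; lra.
    have p1 : beta * (U B - mu) <= beta * (B - a) by rewrite ler_pM2l.
    have p2 : 0 < (1 - beta) * (`|a| + 1) by rewrite mulr_gt0 // ?subr_gt0 // ltr_wpDl.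
    have p3 : 0 <= (1 - beta) * (`|z| - z) by rewrite mulr_ge0 // ?subr_ge0 ?ler_norm // ltW.
    have p4 : 0 <= beta * (`|mu - a| - (mu - a)) by rewrite mulr_ge0 // ?subr_ge0 ?ler_norm // ltW.
    have p5 : 0 <= (1 - beta) * `|mu - a| by rewrite mulr_ge0 // subr_ge0 ltW.
    have e1 : (1 - beta) * (`|a| + 1 + `|z|) = (1 - beta) * (`|a| + 1) + (1 - beta) * `|z| by ring.
    have e2 : beta * (U B - mu) = beta * U B - beta * mu by ring.
    have e3 : beta * (B - a) = beta * B - beta * a by ring.
    have e4 : (1 - beta) * (`|z| - z) = (1 - beta) * `|z| - z * (1 - beta) by ring.
    have e5 : beta * (`|mu - a| - (mu - a)) = beta * `|mu - a| - beta * mu + beta * a by ring.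
    have e6 : (1 - beta) * `|mu - a| = `|mu - a| - beta * `|mu - a| by ring.
    have e7 : (1 - beta) * B = B - beta * B by ring.
    lra.
  have [x0 [hx0 ex0]] := @root_exists R U a B beta z hb aB (fun x y ax xy _ => hU1 x y ax xy) ltac:(rewrite Ua; lra) gB.
  split.
    exists x0; split => [|y [hy ey]]; first by case/andP: hx0 => -> _.
    case/andP: hx0 => x1 x2.
    case: (leP x0 y) => h.
      by apply: (@uniq_fix R U beta z _ _ hb h) => //; have [] := hU1 x0 y x1 h.
    by apply/esym; apply: (@uniq_fix R U beta z _ _ hb (ltW h)) => //; have [] := hU1 y x0 hy (ltW h).
  move=> w0 w1 ew0.
  have aw0 : a < w0.
    rewrite lt_neqAle w1 andbT; apply/eqP => e; move: ew0; rewrite -e Ua; lra.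
  have hS : forall x y, a < x -> x < y -> True -> U x < U y.
    by move=> x y ax xy _; apply: hU2.
  have IT := @iter_prop R U (fun _ => True) a beta z c w0 hb c0 hS (fun _ _ _ => I) aw0 I ew0.
  split; first by have [] := IT 0%N.
  by move=> n _; have [_ [_ []]] := IT n.
Qed.
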